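(* For each GES $\gamma=(E,\#,\to,\lhd)$ there is an RCES $\rho$ (over the same event set $E$) such that $\gamma$ and $\rho$ are transition equivalent.
   Context: GES: $\gamma=(E,\#,\to,\lhd)$ with $\#\subseteq E^2$ irreflexive symmetric, $\to\subseteq E^2$ a binary relation (initial causality), $\lhd\subseteq E^3$ where $(c,m,t)\in\lhd$ means ''$m$ adds $c$ as a cause of $t$'', requiring $\neg(c\to t)$. $\mathrm{ic}(e)=\{e'\mid e'\to e\}$, $\mathrm{ac}(H,e)=\{e'\mid\exists a\in H.(e',a,e)\in\lhd\}$. For $X,Y\subseteq E$, $X\to_g Y$ iff $X\subseteq Y$, $\neg(e\#e')$ for all $e,e'\in Y$, $\mathrm{ic}(e)\cup\mathrm{ac}(X,e)\subseteq X$ for all $e\in Y\setminus X$, and for all $t,m\in Y\setminus X$ and $c\in E$, $(c,m,t)\in\lhd$ implies $c\in X$. RCES: a pair $\rho=(E,\vdash)$ with $\vdash\subseteq 2^E\times 2^E$; for $X,Y\subseteq E$, $X\to_{rc}Y$ iff $X\subseteq Y$ and for every $Z\subseteq Y$ there is $W\subseteq X$ with $W\vdash Z$. For an event structure $\mu$ with transition relation $\to_\mu$ on subsets of its events, $\mathcal{C}(\mu)$ is the set of sets reachable from $\emptyset$ by finitely many $\to_\mu$-steps. Two such structures $\mu,\mu'$ are transition equivalent iff $\mathcal{C}(\mu)=\mathcal{C}(\mu')$ and for all $X,Y\in\mathcal{C}(\mu)$: $X\to_\mu Y$ iff $X\to_{\mu'}Y$. *)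

(* Defs.v *)
From Stdlib Require Import Classical.

Definition subset {E : Type} (X Y : E -> Prop) : Prop := forall e, X e -> Y e.

Record GES (E : Type) := mkGES {
  ges_conf : E -> E -> Prop;
  ges_ic   : E -> E -> Prop;            (* initial causality ->, ic e' e means e' -> e *)
  ges_add  : E -> E -> E -> Prop;       (* (c,m,t) in <| : m adds c as a cause of t *)
  ges_conf_irrefl : forall e, ~ ges_conf e e;
  ges_conf_sym : forall e e', ges_conf e e' -> ges_conf e' e;
  ges_add_not_ic : forall c m t, ges_add c m t -> ~ ges_ic c t
}.
Arguments ges_conf {E}. Arguments ges_ic {E}. Arguments ges_add {E}.

Definition ic {E} (g : GES E) (e : E) : E -> Prop := fun e' => ges_ic g e' e.
Definition ac {E} (g : GES E) (H : E -> Prop) (e : E) : E -> Prop :=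
  fun e' => exists a, H a /\ ges_add g e' a e.

Definition ges_trans {E} (g : GES E) (X Y : E -> Prop) : Prop :=
  subset X Y /\
  (forall e e', Y e -> Y e' -> ~ ges_conf g e e') /\
  (forall e, Y e -> ~ X e -> subset (fun x => ic g e x \/ ac g X e x) X) /\
  (forall t m c, Y t -> ~ X t -> Y m -> ~ X m -> ges_add g c m t -> X c).

Record RCES (E : Type) := mkRCES { rces_en : (E -> Prop) -> (E -> Prop) -> Prop }.
Arguments rces_en {E}.

Definition rces_trans {E} (r : RCES E) (X Y : E -> Prop) : Prop :=
  subset X Y /\
  forall Z, subset Z Y -> exists W, subset W X /\ rces_en r W Z.

Inductive reachable {E} (step : (E -> Prop) -> (E -> Prop) -> Prop)
  : (E -> Prop) -> Prop :=
| reach_empty : reachable step (fun _ => False)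
| reach_step : forall X Y, reachable step X -> step X Y -> reachable step Y.

Definition transition_equivalent {E}
  (s1 s2 : (E -> Prop) -> (E -> Prop) -> Prop) : Prop :=
  (forall X, reachable s1 X <-> reachable s2 X) /\
  (forall X Y, reachable s1 X -> reachable s1 Y -> (s1 X Y <-> s2 X Y)).

(* Main.v *)
Require Import Defs.
From Stdlib Require Import Classical.

Definition en {E} (g : GES E) (W Z : E -> Prop) : Prop :=
  (forall e e', Z e -> Z e' -> ~ ges_conf g e e') /\
  (forall e, Z e -> W e \/
     (subset (ic g e) W /\ forall a c, Z a -> ges_add g c a e -> W c)).

Lemma equiv_trans {E} (g : GES E) X Y :
  ges_trans g X Y <-> rces_trans (mkRCES E (en g)) X Y.
Proof.
  split.
  - intros [HXY [Hc [Hi Ha]]]. split; [exact HXY|].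
    intros Z HZ. exists X. split; [intros x h; exact h|]. simpl. split.
    + intros e e' h1 h2. apply Hc; auto.
    + intros e He. destruct (classic (X e)) as [Hx|Hx]; [left; exact Hx|right].
      split.
      * intros x Hx'. apply (Hi e (HZ e He) Hx). left; exact Hx'.
      * intros a c Ha' Hadd. destruct (classic (X a)) as [HXa|HXa].
        -- apply (Hi e (HZ e He) Hx). right. exists a. auto.
        -- apply (Ha e a c (HZ e He) Hx (HZ a Ha') HXa Hadd).
  - intros [HXY H]. simpl in H. split; [exact HXY|]. split; [|split].
    + intros e e' h1 h2.
      destruct (H (fun x => x = e \/ x = e')) as [W [_ [Hc _]]].
      { intros x [->| ->]; auto. }
      apply Hc; auto.
    + intros e He Hx x [Hic | [a [HaX Hadd]]].
      * destruct (H (fun x => x = e)) as [W [HW [_ Hd]]].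
        { intros y ->; auto. }
        destruct (Hd e eq_refl) as [h|[h _]]; [elim Hx; auto| auto].
      * destruct (H (fun x => x = e \/ x = a)) as [W [HW [_ Hd]]].
        { intros y [->| ->]; auto. }
        destruct (Hd e (or_introl eq_refl)) as [h|[_ h]]; [elim Hx; auto|].
        apply HW. apply (h a); auto.
    + intros t m c Ht Htx Hm Hmx Hadd.
      destruct (H (fun x => x = t \/ x = m)) as [W [HW [_ Hd]]].
      { intros y [->| ->]; auto. }
      destruct (Hd t (or_introl eq_refl)) as [h|[_ h]]; [elim Htx; auto|].
      apply HW. apply (h m); auto.
Qed.

Theorem lemma14 (E : Type) (g : GES E) :
  exists r : RCES E, transition_equivalent (ges_trans g) (rces_trans r).
Proof.
  exists (mkRCES E (en g)). split.
  - intros X; split; intro R; induction R.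
    + constructor.
    + eapply reach_step; eauto. apply equiv_trans; auto.
    + constructor.
    + eapply reach_step; eauto. apply equiv_trans; auto.
  - intros. apply equiv_trans.
Qed.
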